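(* Consider $n$ agents and $m$ indivisible items where each agent has a binary submodular valuation (notation as in the context). For any $\chi,\chi'\in\mathcal{SS}$ with profiles $(h_1,\dots,h_n)$ and $(h'_1,\dots,h'_n)$, we have $|h_i-h'_i|\le1$ for every agent $i\in[n]$; i.e. the Chebyshev distance between the profiles is at most $1$.
   Context: Agents $[n]$, items $[m]$. Each agent $i$ has a valuation $v_i:2^{[m]}\to\mathbb{R}_{\ge0}$ with $v_i(\emptyset)=0$ that is binary submodular: the marginal gain $\Delta_i(S;o)=v_i(S\cup\{o\})-v_i(S)$ lies in $\{0,1\}$ for all $S$ and $o$, and $\Delta_i(T;o)\le\Delta_i(S;o)$ whenever $S\subseteq T\subseteq[m]$, $o\notin T$. An allocation $\chi=(\chi_1,\dots,\chi_n)$ is a tuple of pairwise disjoint subsets of $[m]$; bundle $\chi_i$ is clean if $\Delta_i(\chi_i\setminus\{o\};o)=1$ for every $o\in\chi_i$ (equivalently $v_i(\chi_i)=|\chi_i|$); $\chi$ is clean if all bundles are clean; $\chi$ is max-USW if it maximizes $\sum_i v_i(\chi_i)$ among all allocations. The profile is $(h_1,\dots,h_n)$ with $h_i=|\chi_i|$. A criterion is a function $f$ from profiles to $\mathbb{R}$ (lower is better), symmetric if invariant under permuting coordinates; $f$ is strongly Pigou–Dalton if $f(\mathbf{q})<f(\mathbf{p})$ whenever there are $j,k$ with $p_j<p_k$, $q_j,q_k\in(p_j,p_k)$ and $q_i=p_i$ for $i\notin\{j,k\}$. $\mathcal{SS}$ denotes the set of clean max-USW allocations that minimize $f$ of the profile,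 among all clean max-USW allocations, for every symmetric strongly Pigou–Dalton criterion $f$. *)

(* Defs.v *)
From HB Require Import structures.
From mathcomp Require Import all_boot all_order.
From mathcomp Require Import fingroup perm.
From mathcomp Require Import all_algebra.
Set Implicit Arguments. Unset Strict Implicit. Unset Printing Implicit Defensive.
Import Order.TTheory GRing.Theory Num.Theory.
Local Open Scope ring_scope.

Definition marg (R : realFieldType) (n m : nat) (v : 'I_n -> {set 'I_m} -> R)
  (i : 'I_n) (S : {set 'I_m}) (o : 'I_m) : R :=
  v i (o |: S) - v i S.

Definition binary_submodular (R : realFieldType) (n m : nat)
  (v : 'I_n -> {set 'I_m} -> R) : Prop :=
  forall i : 'I_n,
    [/\ v i set0 = 0,
        (forall S : {set 'I_m}, 0 <= v i S),
        (forall (S : {set 'I_m}) o, marg v i S o = 0 \/ marg v i S o = 1) &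
        (forall (S T : {set 'I_m}) (o : 'I_m), S \subset T -> o \notin T -> marg v i T o <= marg v i S o)].

Definition allocation (n m : nat) (chi : 'I_n -> {set 'I_m}) : Prop :=
  forall i j : 'I_n, i != j -> [disjoint chi i & chi j].

Definition clean_bundle (R : realFieldType) (n m : nat)
  (v : 'I_n -> {set 'I_m} -> R) (i : 'I_n) (B : {set 'I_m}) : Prop :=
  forall o, o \in B -> marg v i (B :\ o) o = 1.

Definition clean (R : realFieldType) (n m : nat)
  (v : 'I_n -> {set 'I_m} -> R) (chi : 'I_n -> {set 'I_m}) : Prop :=
  forall i, clean_bundle v i (chi i).

Definition usw (R : realFieldType) (n m : nat)
  (v : 'I_n -> {set 'I_m} -> R) (chi : 'I_n -> {set 'I_m}) : R :=
  \sum_(i < n) v i (chi i).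

Definition max_usw (R : realFieldType) (n m : nat)
  (v : 'I_n -> {set 'I_m} -> R) (chi : 'I_n -> {set 'I_m}) : Prop :=
  allocation chi /\
  forall chi' : 'I_n -> {set 'I_m}, allocation chi' -> usw v chi' <= usw v chi.

Definition clean_max_usw (R : realFieldType) (n m : nat)
  (v : 'I_n -> {set 'I_m} -> R) (chi : 'I_n -> {set 'I_m}) : Prop :=
  clean v chi /\ max_usw v chi.

Definition profile (n m : nat) (chi : 'I_n -> {set 'I_m}) : {ffun 'I_n -> nat} :=
  [ffun i => #|chi i|].

(* criteria: functions from profiles to R (lower is better) *)
Definition symmetric_crit (R : realFieldType) (n : nat)
  (f : {ffun 'I_n -> nat} -> R) : Prop :=
  forall (p : {ffun 'I_n -> nat}) (s : {perm 'I_n}),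
    f [ffun i => p (s i)] = f p.

Definition strongly_PD (R : realFieldType) (n : nat)
  (f : {ffun 'I_n -> nat} -> R) : Prop :=
  forall (p q : {ffun 'I_n -> nat}) (j k : 'I_n),
    (p j < p k)%N ->
    (p j < q j < p k)%N ->
    (p j < q k < p k)%N ->
    (forall i, i != j -> i != k -> q i = p i) ->
    f q < f p.

Definition in_SS (R : realFieldType) (n m : nat)
  (v : 'I_n -> {set 'I_m} -> R) (chi : 'I_n -> {set 'I_m}) : Prop :=
  clean_max_usw v chi /\
  forall f : {ffun 'I_n -> nat} -> R,
    symmetric_crit f -> strongly_PD f ->
    forall chi', clean_max_usw v chi' -> f (profile chi) <= f (profile chi').

(* Main.v *)
Set Warnings "-notation-overridden -ambiguous-paths".
Require Import Defs.
From mathcomp Require Import all_boot all_order.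
From mathcomp Require Import fingroup perm.
From mathcomp Require Import all_algebra.
From mathcomp Require Import zify ring lra.
Set Implicit Arguments. Unset Strict Implicit. Unset Printing Implicit Defensive.
Import Order.TTheory GRing.Theory Num.Theory.
Local Open Scope ring_scope.

Lemma set_ind (T : finType) (P : {set T} -> Prop) :
  P set0 -> (forall (S : {set T}) (x : T), x \notin S -> P S -> P (x |: S)) -> forall S, P S.
Proof.
move=> P0 PS S; have [k] := ubnP #|S|; elim: k S => // k IH S hS.
have [->|/set0Pn [x xS]] := eqVneq S set0; first by [].
rewrite -(setD1K xS); apply: PS; first by rewrite setD11.
apply: IH; move: hS; rewrite (cardsD1 x S) xS; lia.
Qed.

Definition rk (R : realFieldType) (m : nat) (w : {set 'I_m} -> R) : Prop :=
  [/\ w set0 = 0,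
      (forall (S : {set 'I_m}) o, w (o |: S) - w S = 0 \/ w (o |: S) - w S = 1) &
      (forall (S T : {set 'I_m}) o, S \subset T -> o \notin T -> w (o |: T) - w T <= w (o |: S) - w S)].

Lemma rk_of (R : realFieldType) (n m : nat) (v : 'I_n -> {set 'I_m} -> R) :
  binary_submodular v -> forall i, rk (v i).
Proof. by move=> hv i; case: (hv i) => h0 _ h01 hsub; split. Qed.


Lemma mg_ge0 (R : realFieldType) (m : nat) (w : {set 'I_m} -> R) (S : {set 'I_m}) (o : 'I_m) :
  rk w -> w S <= w (o |: S).
Proof. by case=> _ h _; case: (h S o) => E; lra. Qed.

Lemma mg_le1 (R : realFieldType) (m : nat) (w : {set 'I_m} -> R) (S : {set 'I_m}) (o : 'I_m) :
  rk w -> w (o |: S) <= w S + 1.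
Proof. by case=> _ h _; case: (h S o) => E; lra. Qed.

Lemma w_le_card (R : realFieldType) (m : nat) (w : {set 'I_m} -> R) (S : {set 'I_m}) :
  rk w -> w S <= #|S|%:R.
Proof.
move=> hw; elim/set_ind: S => [|S x xS IH]; first by case: hw => ->; rewrite cards0.
rewrite cardsU1 xS /= natrD; apply: le_trans (mg_le1 _ _ hw) _.
by rewrite addrC lerD2l.
Qed.

Lemma w_mono (R : realFieldType) (m : nat) (w : {set 'I_m} -> R) (S T : {set 'I_m}) :
  rk w -> S \subset T -> w S <= w T.
Proof.
move=> hw /setUidPr <-; elim/set_ind: T => [|T x xT IH]; first by rewrite setU0.
by rewrite setUCA; apply: le_trans IH (mg_ge0 _ _ hw).
Qed.

Lemma clean_sub (R : realFieldType) (m : nat) (w : {set 'I_m} -> R) (B : {set 'I_m}) :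
  rk w -> (forall o, o \in B -> w (o |: (B :\ o)) - w (B :\ o) = 1) ->
  forall S : {set 'I_m}, S \subset B -> w S = #|S|%:R.
Proof.
move=> hw hB; elim/set_ind => [|S x xS IH] sub; first by case: hw => ->; rewrite cards0.
have xB : x \in B by apply: (subsetP sub); rewrite setU11.
have SB : S \subset B by apply: subset_trans sub; apply: subsetUr.
have SBx : S \subset B :\ x.
  apply/subsetP => y yS; rewrite in_setD1 (subsetP SB y yS) andbT.
  by apply: contraNneq xS => <-.
have h := (let: And3 _ _ h := hw in h) S (B :\ x) x SBx (negbT (setD11 x B)).
have h1 := hB x xB; have h2 := mg_le1 S x hw.
rewrite cardsU1 xS natrD /= -IH //; lra.
Qed.

Lemma clean_of_indep (R : realFieldType) (m : nat) (w : {set 'I_m} -> R) (B : {set 'I_m}) :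
  rk w -> w B = #|B|%:R -> forall o, o \in B -> w (o |: (B :\ o)) - w (B :\ o) = 1.
Proof.
move=> hw hB o oB; rewrite (setD1K oB).
have h1 := w_le_card (B :\ o) hw.
move: hB; rewrite (cardsD1 o B) oB add1n -addn1 natrD => hB.
case: hw => _ h _; case: (h (B :\ o) o) => E; rewrite (setD1K oB) in E; lra.
Qed.

Lemma augment (R : realFieldType) (m : nat) (w : {set 'I_m} -> R) (I J : {set 'I_m}) :
  rk w -> w I = #|I|%:R -> w J = #|J|%:R -> (#|I| < #|J|)%N ->
  exists o, [/\ o \in J, o \notin I & w (o |: I) = #|o |: I|%:R].
Proof.
move=> hw hI hJ hlt.
case: (boolP [exists o, [&& o \in J, o \notin I & w (o |: I) == w I + 1]]).
  case/existsP => o /and3P [oJ oI /eqP E]; exists o; split => //.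
  by rewrite cardsU1 oI natrD E hI addrC.
rewrite negb_exists => /forallP H.
have key : forall D : {set 'I_m}, D \subset J -> w (I :|: D) = w I.
  elim/set_ind => [|D x xD IH] sub; first by rewrite setU0.
  have xJ : x \in J by apply: (subsetP sub); rewrite setU11.
  have DJ : D \subset J by apply: subset_trans sub; apply: subsetUr.
  rewrite setUCA; case xI: (x \in I).
    by rewrite (setUidPr _) ?IH // sub1set in_setU xI.
  have h0 := mg_ge0 (I :|: D) x hw.
  have xn : x \notin I :|: D by rewrite in_setU xI (negbTE xD).
  have hsub := (let: And3 _ _ h := hw in h) I (I :|: D) x (subsetUl _ _) xn.
  have hx := H x; rewrite xJ xI /= in hx.
  have e : w (x |: I) = w I.
    case: hw => _ h _; case: (h I x) => E; first lra.
    have E' : w (x |: I) = w I + 1 by lra.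
    by move: hx; rewrite E' eqxx.
  have := IH DJ; lra.
have := w_mono hw (subsetUr I J); rewrite key // hI hJ ler_nat; lia.
Qed.

Lemma disjP (T : finType) (A B : {set T}) : (forall x, x \in A -> x \in B -> False) -> [disjoint A & B].
Proof. move=> H; rewrite -setI_eq0; apply/eqP/setP => x; rewrite in_setI in_set0; apply/negP => /andP [] /H h /h. done. Qed.
Lemma disjE (T : finType) (A B : {set T}) x : [disjoint A & B] -> x \in A -> x \in B -> False.
Proof. move=> d xA xB; move: d; rewrite -setI_eq0 => /eqP/setP/(_ x); rewrite in_setI xA xB in_set0. done. Qed.

Lemma sum_delta (n : nat) (i : 'I_n) : (\sum_(b < n) ((b == i) : nat) = 1)%N.
Proof.
rewrite (bigD1 i) //= eqxx big1 // => b /negbTE ->; done.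
Qed.

Lemma sum_shift (n : nat) (F G : 'I_n -> nat) (i j : 'I_n) :
  (forall b, F b + (b == j) = G b + (b == i))%N -> (\sum_(b < n) F b = \sum_(b < n) G b)%N.
Proof.
move=> H.
have : (\sum_(b < n) (F b + (b == j)) = \sum_(b < n) (G b + (b == i)))%N by apply: eq_bigr => b _; apply: H.
rewrite !big_split /= !sum_delta; lia.
Qed.

Lemma sum_lt (n : nat) (F G : 'I_n -> nat) (i : 'I_n) :
  (forall b, F b <= G b)%N -> (F i < G i)%N -> (\sum_(b < n) F b < \sum_(b < n) G b)%N.
Proof.
move=> H hi; rewrite (bigD1 i) //= (bigD1 i (F := G)) //=.
have : (\sum_(b | b != i) F b <= \sum_(b | b != i) G b)%N by apply: leq_sum => b _; apply: H.
move=> h; rewrite -addSn; exact: leq_add.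
Qed.

Lemma clean_card (R : realFieldType) (n m : nat) (v : 'I_n -> {set 'I_m} -> R) (i : 'I_n) (B : {set 'I_m}) :
  binary_submodular v -> clean_bundle v i B -> v i B = #|B|%:R.
Proof. by move=> hv cB; apply: (clean_sub (rk_of hv i) cB). Qed.

Lemma indep_clean (R : realFieldType) (n m : nat) (v : 'I_n -> {set 'I_m} -> R) (i : 'I_n) (B : {set 'I_m}) :
  binary_submodular v -> v i B = #|B|%:R -> clean_bundle v i B.
Proof. by move=> hv hB; apply: (clean_of_indep (rk_of hv i) hB). Qed.

Lemma clean_subset (R : realFieldType) (n m : nat) (v : 'I_n -> {set 'I_m} -> R) (i : 'I_n) (B S : {set 'I_m}) :
  binary_submodular v -> clean_bundle v i B -> S \subset B -> clean_bundle v i S.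
Proof. by move=> hv cB sub; apply: indep_clean => //; apply: (clean_sub (rk_of hv i) cB). Qed.

Lemma usw_clean (R : realFieldType) (n m : nat) (v : 'I_n -> {set 'I_m} -> R) (X : 'I_n -> {set 'I_m}) :
  binary_submodular v -> clean v X -> usw v X = (\sum_(a < n) #|X a|)%N%:R.
Proof.
move=> hv cX; rewrite /usw natr_sum; apply: eq_bigr => a _; exact: clean_card.
Qed.

Lemma Wplus (R : realFieldType) (n m : nat) (v : 'I_n -> {set 'I_m} -> R) (X : 'I_n -> {set 'I_m}) :
  binary_submodular v -> clean v X -> allocation X ->
  forall (Y : 'I_n -> {set 'I_m}),
  clean v Y -> allocation Y ->
  (forall Z, clean v Z -> allocation Z -> (\sum_(a < n) #|Z a| <= \sum_(a < n) #|Y a|)%N) ->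
  forall i, (#|Y i| < #|X i|)%N ->
  exists j Y', [/\ (#|X j| < #|Y j|)%N, clean v Y', allocation Y' &
     forall b, (#|Y' b| + (b == j) = #|Y b| + (b == i))%N].
Proof.
move=> hv cX aX Y.
have [k] := ubnP (\sum_(a < n) #|X a :\: Y a|)%N; elim: k Y => // k IH Y hk cY aY mY i hi.
have [o [oX oY co]] := augment (rk_of hv i) (clean_card hv (cY i)) (clean_card hv (cX i)) hi.
case: (boolP [exists c, o \in Y c]) => [/existsP [c oc] | /existsPn free].
- have ci : c != i by apply: contraNneq oY => <-.
  pose Y1 := fun b => if b == c then Y c :\ o else if b == i then o |: Y i else Y b.
  have memY1 : forall a x, x \in Y1 a -> (x \in Y a /\ x != o) \/ (a == i /\ x == o).
    move=> a x; rewrite /Y1; case: eqP => [->|ac].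
      by rewrite in_setD1 => /andP [xo xc]; left.
    case: eqP => [->|ai].
      rewrite in_setU1 => /orP [/eqP ->|xi]; first by right.
      by left; split => //; apply: contraNneq oY => <-.
    move=> xa; left; split => //; apply/eqP => exo; subst x.
    by apply: (disjE (aY a c (introN eqP ac)) xa oc).
  have cY1 : clean v Y1.
    move=> b; rewrite /Y1; case: eqP => [->|_].
      by apply: (clean_subset hv (cY c)); apply: subsetDl.
    case: eqP => [->|_] //; exact: indep_clean.
  have aY1 : allocation Y1.
    move=> a b ab; apply: disjP => x /memY1 h1 /memY1 h2.
    case: h1 h2 => [[xa xo]|[/eqP ai /eqP xo]] [[xb xo']|[/eqP bi /eqP xo']].
    + exact: (disjE (aY a b ab) xa xb).
    + by rewrite xo' eqxx in xo.
    + by rewrite xo eqxx in xo'.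
    + by rewrite ai bi eqxx in ab.
  have pY1 : forall b, (#|Y1 b| + (b == c) = #|Y b| + (b == i))%N.
    move=> b; rewrite /Y1; case: eqP => [->|bc].
      rewrite (negbTE ci) (cardsD1 o (Y c)) oc; lia.
    case: eqP => [->|bi]; last by rewrite addn0.
    by rewrite cardsU1 oY /= addn0 addnC.
  have sY1 := sum_shift pY1.
  have mY1 : forall Z, clean v Z -> allocation Z -> (\sum_(a < n) #|Z a| <= \sum_(a < n) #|Y1 a|)%N.
    by move=> Z cZ aZ; rewrite sY1; apply: mY.
  case: (ltnP #|X c| #|Y c|) => hc.
    by exists c, Y1; split.
  have hmeas : (\sum_(a < n) #|X a :\: Y1 a| < \sum_(a < n) #|X a :\: Y a|)%N.
    apply: (sum_lt (i := i)).
      move=> a; apply: subset_leq_card; apply/subsetP => x; rewrite !in_setD => /andP [xn xa].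
      rewrite xa andbT; apply: contra xn => xY; rewrite /Y1 /=.
      have [ac|ac] := eqVneq a c.
        subst a; rewrite in_setD1 xY andbT; apply/eqP => exo; subst x.
        have ic : i != c by rewrite eq_sym.
        by apply: (disjE (aX i c ic) oX xa).
      have [ai|ai] := eqVneq a i; last by [].
      by subst a; rewrite in_setU1 xY orbT.
    apply: proper_card; apply/properP; split.
      apply/subsetP => x; rewrite !in_setD => /andP [xn xa]; rewrite xa andbT.
      by apply: contra xn => xY; rewrite /Y1 eq_sym (negbTE ci) eqxx in_setU1 xY orbT.
    exists o; first by rewrite in_setD oY oX.
    by rewrite in_setD /Y1 eq_sym (negbTE ci) eqxx setU11.
  have hk1 : (\sum_(a < n) #|X a :\: Y1 a| < k)%N by move: hmeas hk; lia.
  have hc1 : (#|Y1 c| < #|X c|)%N by have := pY1 c; rewrite eqxx (negbTE ci); lia.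
  have [j [Y' [hj cY' aY' pY']]] := IH Y1 hk1 cY1 aY1 mY1 c hc1.
  have ji : j != i.
    apply/eqP => eji; subst j; have := pY1 i; rewrite eqxx eq_sym (negbTE ci); lia.
  have jc : j != c by apply/eqP => ejc; subst j; lia.
  exists j, Y'; split => //.
    by have := pY1 j; rewrite (negbTE ji) (negbTE jc); lia.
  by move=> b; rewrite pY' pY1.
- pose Z := fun b => if b == i then o |: Y i else Y b.
  have cZ : clean v Z by move=> b; rewrite /Z; case: eqP => [->|_] //; exact: indep_clean.
  have aZ : allocation Z.
    move=> a b ab; apply: disjP => x; rewrite /Z.
    case: eqP => [ai|ai]; case: eqP => [bi|bi].
    + by rewrite ai bi eqxx in ab.
    + rewrite in_setU1 => /orP [/eqP ->|xi] xb; first by move: (free b); rewrite xb.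
      by subst a; apply: (disjE (aY i b ab) xi xb).
    + move=> xa; rewrite in_setU1 => /orP [/eqP exo|xi]; first by subst x; move: (free a); rewrite xa.
      by subst b; apply: (disjE (aY a i ab) xa xi).
    + by move=> xa xb; apply: (disjE (aY a b ab) xa xb).
  have pZ : forall b, (#|Z b| + (b == i) = #|Y b| + (b == i) + (b == i))%N.
    move=> b; rewrite /Z /=; have [->|bi] := eqVneq b i; last by rewrite !addn0.
    rewrite cardsU1 oY /=; lia.
  have : (\sum_(b < n) (#|Z b| + (b == i)) = \sum_(b < n) (#|Y b| + (b == i) + (b == i)))%N by apply: eq_bigr => b _; apply: pZ.
  rewrite !big_split /= !sum_delta => e.
  have h : (\sum_(b < n) #|Z b| <= \sum_(b < n) #|Y b|)%N := mY Z cZ aZ.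
  move/eqP: e; rewrite eqn_add2r => /eqP e.
  by move: h; rewrite e addn1 ltnn.
Qed.

Definition inB (R : realFieldType) (n m : nat) (v : 'I_n -> {set 'I_m} -> R) (p : 'I_n -> nat) : Prop :=
  exists X, clean_max_usw v X /\ forall a, #|X a| = p a.

Lemma cmu_max (R : realFieldType) (n m : nat) (v : 'I_n -> {set 'I_m} -> R) (Y : 'I_n -> {set 'I_m}) :
  binary_submodular v -> clean_max_usw v Y ->
  forall Z, clean v Z -> allocation Z -> (\sum_(a < n) #|Z a| <= \sum_(a < n) #|Y a|)%N.
Proof.
by move=> hv [cY [aY mY]] Z cZ aZ; have := mY Z aZ; rewrite !usw_clean // ler_nat.
Qed.

Lemma cmu_of (R : realFieldType) (n m : nat) (v : 'I_n -> {set 'I_m} -> R) (Y Y' : 'I_n -> {set 'I_m}) :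
  binary_submodular v -> clean_max_usw v Y -> clean v Y' -> allocation Y' ->
  (\sum_(a < n) #|Y' a| = \sum_(a < n) #|Y a|)%N -> clean_max_usw v Y'.
Proof.
move=> hv [cY [aY mY]] cY' aY' e; split => //; split => // chi achi.
by apply: le_trans (mY chi achi) _; rewrite !usw_clean // e.
Qed.

Lemma WplusB (R : realFieldType) (n m : nat) (v : 'I_n -> {set 'I_m} -> R) (z w : 'I_n -> nat) (a : 'I_n) :
  binary_submodular v -> inB v z -> inB v w -> (z a < w a)%N ->
  exists j, (w j < z j)%N /\ exists z', inB v z' /\ forall b, (z' b + (b == j) = z b + (b == a))%N.
Proof.
move=> hv [Y [hY pY]] [X [hX pX]] h.
have [cX [aX _]] := hX; have [cY [aY _]] := hY.
have hi : (#|Y a| < #|X a|)%N by rewrite pY pX.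
have [j [Y' [hj cY' aY' pY']]] := Wplus hv cX aX cY aY (cmu_max hv hY) hi.
exists j; split; first by rewrite -pX -pY.
exists (fun b => #|Y' b|); split.
  by exists Y'; split => //; apply: (cmu_of hv hY cY' aY' (sum_shift pY')).
by move=> b; rewrite pY' pY.
Qed.

Definition dist (n : nat) (x y : 'I_n -> nat) : nat :=
  (\sum_(a < n) ((x a - y a) + (y a - x a)))%N.

Lemma SE (R : realFieldType) (n m : nat) (v : 'I_n -> {set 'I_m} -> R) :
  binary_submodular v ->
  forall k (x y : 'I_n -> nat), (dist x y < k)%N -> inB v x -> inB v y ->
  forall i, (y i < x i)%N ->
  exists j, [/\ (x j < y j)%N,
     (exists x', inB v x' /\ forall b, (x' b + (b == i) = x b + (b == j))%N) &
     (exists y', inB v y' /\ forall b, (y' b + (b == j) = y b + (b == i))%N)].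
Proof.
move=> hv; elim=> // k IH x y hk Bx By i hi.
have [j [hj [y1 [By1 py1]]]] := WplusB hv By Bx hi.
have [k' [hk' [x1 [Bx1 px1]]]] := WplusB hv Bx By hj.
have [ek|nek] := eqVneq k' i.
  subst k'; exists j; split => //; [exists x1 | exists y1]; by split.
have ji : j != i by apply/eqP => e; subst j; lia.
have jk : j != k' by apply/eqP => e; subst j; lia.
have x1i : x1 i = x i.
  by have := px1 i; rewrite [i == k']eq_sym [i == j]eq_sym (negbTE nek) (negbTE ji) !addn0.
have hd : (dist x1 y < dist x y)%N.
  apply: (sum_lt (i := j)).
    move=> a; have := px1 a.
    have [->|aj] := eqVneq a j; first by rewrite (negbTE jk); lia.
    have [->|ak] := eqVneq a k'; last by rewrite !addn0 => ->.
    lia.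
  by have := px1 j; rewrite eqxx (negbTE jk); lia.
have hk1 : (dist x1 y < k)%N by move: hd hk; rewrite /dist; lia.
have hi1 : (y i < x1 i)%N by rewrite x1i.
have [j2 [hj2 [u [Bu pu]] [y2 [By2 py2]]]] := IH x1 y hk1 Bx1 By i hi1.
have j2k : j2 != k'.
  apply/eqP => e; subst j2; have := px1 k'; rewrite eqxx eq_sym (negbTE jk); lia.
have ukx : (u k' < x k')%N.
  have := pu k'; have := px1 k'; rewrite eqxx (negbTE nek) eq_sym (negbTE jk) eq_sym (negbTE j2k); lia.
have [l [hl [u' [Bu' pu']]]] := WplusB hv Bu Bx ukx.
have hlj : (l == j) || (l == j2).
  apply/negPn/negP; rewrite negb_or => /andP [lj lj2].
  move: hl (pu l) (px1 l); rewrite (negbTE lj) (negbTE lj2); lia.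
have xj2 : (x j2 < y j2)%N.
  by move: hj2 (px1 j2); rewrite (negbTE j2k); lia.
case/orP: hlj => /eqP el; subst l.
- exists j2; split => //; last by exists y2.
  exists u'; split => // b; move: (pu' b) (pu b) (px1 b); lia.
- exists j; split => //; last by exists y1.
  exists u'; split => // b; move: (pu' b) (pu b) (px1 b); lia.
Qed.

Definition fcrit (R : realFieldType) (n : nat) (p : {ffun 'I_n -> nat}) : R :=
  ((\sum_(a < n) 2 ^ p a)%N)%:R.

Lemma fcrit_sym (R : realFieldType) (n : nat) : symmetric_crit (@fcrit R n).
Proof.
move=> p s; rewrite /fcrit; congr (_%:R).
rewrite [RHS](reindex_inj (@perm_inj _ s)) /=; apply: eq_bigr => a _; by rewrite ffunE.
Qed.

Lemma fcrit_PD (R : realFieldType) (n : nat) : strongly_PD (@fcrit R n).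
Proof.
move=> p q j k h1 /andP [h2 h3] /andP [h4 h5] h6; rewrite /fcrit ltr_nat.
have jk : j != k by apply/eqP => e; subst k; lia.
have kj : k != j by rewrite eq_sym.
have E : forall g : 'I_n -> nat, (\sum_(i < n) g i = g j + g k + \sum_(i < n | (i != j) && (i != k)) g i)%N.
  by move=> g; rewrite (bigD1 j) //= (bigD1 k) //= addnA.
rewrite (E (fun i => (2 ^ q i)%N)) (E (fun i => (2 ^ p i)%N)) /=.
have -> : (\sum_(i < n | (i != j) && (i != k)) 2 ^ q i = \sum_(i < n | (i != j) && (i != k)) 2 ^ p i)%N.
  by apply: eq_bigr => i /andP [ij ik]; rewrite h6.
set e := (p k).-1.
have pk : p k = e.+1 by rewrite /e; lia.
have a1 : (2 ^ q j <= 2 ^ e)%N by apply: leq_pexp2l => //; lia.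
have a2 : (2 ^ q k <= 2 ^ e)%N by apply: leq_pexp2l => //; lia.
have a3 : (0 < 2 ^ p j)%N by rewrite expn_gt0.
rewrite pk expnS ltn_add2r.
move: a1 a2 a3; move: (2 ^ q j)%N (2 ^ q k)%N (2 ^ p j)%N (2 ^ e)%N => A B C D; lia.
Qed.

Lemma LO (R : realFieldType) (n m : nat) (v : 'I_n -> {set 'I_m} -> R) (chi : 'I_n -> {set 'I_m})
  (q : 'I_n -> nat) (a b : 'I_n) :
  in_SS v chi -> inB v q -> (forall c, q c + (c == a) = #|chi c| + (c == b))%N ->
  (#|chi b| + 2 <= #|chi a|)%N -> False.
Proof.
move=> [hcmu hmin] [chi2 [h2 p2]] hq hab.
have ab : a != b by apply/eqP => e; subst b; lia.
have hle := hmin (@fcrit R n) (@fcrit_sym R n) (@fcrit_PD R n) chi2 h2.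
have hlt : @fcrit R n (profile chi2) < @fcrit R n (profile chi).
  apply: (@fcrit_PD R n _ _ b a); rewrite ?ffunE ?p2.
  - lia.
  - by have := hq b; rewrite eqxx [b == a]eq_sym (negbTE ab) => h; apply/andP; split; lia.
  - by have := hq a; rewrite eqxx (negbTE ab) => h; apply/andP; split; lia.
  - move=> c cb ca; rewrite !ffunE p2; have := hq c; rewrite (negbTE ca) (negbTE cb); lia.
by move: hle; rewrite leNgt hlt.
Qed.

Lemma half (R : realFieldType) (n m : nat) (v : 'I_n -> {set 'I_m} -> R) (chi chi' : 'I_n -> {set 'I_m}) :
  binary_submodular v -> in_SS v chi -> in_SS v chi' -> forall i, (#|chi i| <= #|chi' i| + 1)%N.
Proof.
move=> hv hS hS' i; rewrite leqNgt; apply/negP => hgt.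
pose x := fun a => #|chi a|; pose y := fun a => #|chi' a|.
have Bx : inB v x by exists chi; split => //; case: hS.
have By : inB v y by exists chi'; split => //; case: hS'.
have hi : (y i < x i)%N by rewrite /x /y; lia.
have [j [hj [x' [Bx' px']] [y' [By' py']]]] := SE hv (ltnSn (dist x y)) Bx By hi.
have c1 : (x i <= x j + 1)%N.
  rewrite leqNgt; apply/negP => h; apply: (LO hS Bx' px'); rewrite /x in h; lia.
have c2 : (y j <= y i + 1)%N.
  rewrite leqNgt; apply/negP => h; apply: (LO hS' By' py'); rewrite /y in h; lia.
move: hgt hj c1 c2; rewrite /x /y; lia.
Qed.

Unset Implicit Arguments.
Set Strict Implicit.

Theorem theorem5 (R : realFieldType) (n m : nat) (v : 'I_n -> {set 'I_m} -> R)
  (chi chi' : 'I_n -> {set 'I_m}) :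
  binary_submodular v ->
  in_SS v chi -> in_SS v chi' ->
  forall i : 'I_n,
    (profile chi i <= profile chi' i + 1)%N /\ (profile chi' i <= profile chi i + 1)%N.
Proof.
move=> hv hS hS' i; rewrite /profile !ffunE; split; exact: half.
Qed.
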